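(* Let $\{x_i,v_i\}_{i\in[N]}$ be the global solution of the delayed Cucker–Smale system described in the context, and let $K$ be the smallest integer such that $K\sigma\ge2\tau$. Then for all $i,j\in[N]$, \[ |x_j(\tau)-x_i(2\tau-\sigma)|\le\Delta^0_x+\mathcal{W}^K_\sigma\Delta^0_v, \] where $\mathcal{W}^K_\sigma:=Z^K_\sigma-(1+\sigma)(Z^{K-1}_\sigma+1)$.
   Context: Let $N\ge2$, $d\ge1$ be integers, $[N]=\{1,\dots,N\}$, $0\le\sigma\le\tau$. Let $\psi:[0,\infty)\to[0,\infty)$ be continuous, nonincreasing, positive everywhere, with $\sup\psi\le1$. Given $x_i^0\in C^1([-\tau,0],\mathbb{R}^d)$, $v_i^0\in C([-\tau,0],\mathbb{R}^d)$ with $\frac{\mathrm d}{\mathrm dt}x_i^0=v_i^0$, $\{x_i,v_i\}$ is the global solution of $\dot x_i(t)=v_i(t)$, $\dot v_i(t)=\sum_{j\ne i}a_{ij}(t)(v_j(t-\tau)-v_i(t-\sigma))$ for $t>0$, with $a_{ij}(t)=\frac1{N-1}\psi(|x_i(t-\sigma)-x_j(t-\tau)|)$, and $x_i=x_i^0$, $v_i=v_i^0$ on $[-\tau,0]$. $\Delta^0_x:=\max_{i,j}\max_{s,t\in[-\tau,0]}|x_i^0(s)-x_j^0(t)|$, $\Delta^0_v:=\max_{i,j}\max_{s,t\in[-\tau,0]}|v_i^0(s)-v_j^0(t)|$. For $k\ge0$, \[ Z^k_\sigma:=\frac{1}{2\sqrt{\sigma(1+\sigma)}}\Big[\big((1+\sigma)+\sqrt{\sigma(1+\sigma)}\big)^{k+1}-\big((1+\sigma)-\sqrt{\sigma(1+\sigma)}\big)^{k+1}\Big],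 \] a polynomial in $\sigma$; equivalently $Z^0_\sigma=1$, $Z^k_\sigma=1+(1+\sigma)Z^{k-1}_\sigma+\sigma\sum_{m=0}^{k-1}Z^m_\sigma$ for $k\ge1$. *)

(* Defs.v *)
From HB Require Import structures.
From mathcomp Require Import all_boot all_order all_algebra.
From mathcomp Require Import all_classical all_reals all_analysis.
Set Implicit Arguments. Unset Strict Implicit. Unset Printing Implicit Defensive.
Import Order.TTheory GRing.Theory Num.Theory.
Import numFieldNormedType.Exports.
Local Open Scope classical_set_scope.
Local Open Scope ring_scope.

Definition enorm {R : realType} {d : nat} (u : 'rV[R]_d) : R :=
  Num.sqrt (\sum_(k < d) u ord0 k ^+ 2).

(* Z_pair k = (Z^k_sigma, \sum_{m=0}^{k} Z^m_sigma), via the recurrence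
   Z^0 = 1, Z^k = 1 + (1+sigma) Z^{k-1} + sigma \sum_{m=0}^{k-1} Z^m. *)
Fixpoint Z_pair {R : realType} (sigma : R) (k : nat) : R * R :=
  match k with
  | 0%N => (1, 1)
  | k'.+1 =>
      let p := Z_pair sigma k' in
      let z := 1 + (1 + sigma) * p.1 + sigma * p.2 in
      (z, p.2 + z)
  end.

Definition Zs {R : realType} (sigma : R) (k : nat) : R := (Z_pair sigma k).1.

Definition Ws {R : realType} (sigma : R) (K : nat) : R :=
  Zs sigma K - (1 + sigma) * (Zs sigma K.-1 + 1).

Definition cs_weight {R : realType} {N d : nat} (psi : R -> R)
  (sigma tau : R) (x : 'I_N -> R -> 'rV[R]_d) (i j : 'I_N) (t : R) : R :=
  (N.-1)%:R^-1 * psi (enorm (x i (t - sigma) - x j (t - tau))).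

Definition Delta0 {R : realType} {N d : nat} (tau : R)
  (y : 'I_N -> R -> 'rV[R]_d) : R :=
  sup [set r : R | exists i j s t, s \in `[- tau, 0] /\ t \in `[- tau, 0] /\
                    r = enorm (y i s - y j t)].

(* Main.v *)
Require Import Defs.
From HB Require Import structures.
From mathcomp Require Import all_boot all_order all_algebra.
From mathcomp Require Import all_classical all_reals all_analysis.
From mathcomp Require Import ring lra.
Import Order.TTheory GRing.Theory Num.Theory.
Import numFieldNormedType.Exports.
Local Open Scope classical_set_scope.
Local Open Scope ring_scope.

Module Helpers.
Set Implicit Arguments. Unset Strict Implicit.

Section Dot.
Variables (R : realType) (d : nat).
Implicit Types u w a b : 'rV[R]_d.

Definition dotv u w : R := \sum_(k < d) u ord0 k * w ord0 k.

Lemma dotvD u a b : dotv u (a + b) = dotv u a + dotv u b.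
Proof. by rewrite /dotv -big_split /=; apply: eq_bigr => k _; rewrite mxE mulrDr. Qed.

Lemma dotvN u a : dotv u (- a) = - dotv u a.
Proof. by rewrite /dotv -sumrN; apply: eq_bigr => k _; rewrite mxE mulrN. Qed.

Lemma dotvB u a b : dotv u (a - b) = dotv u a - dotv u b.
Proof. by rewrite dotvD dotvN. Qed.

Lemma dotvZ u c a : dotv u (c *: a) = c * dotv u a.
Proof. by rewrite /dotv mulr_sumr; apply: eq_bigr => k _; rewrite mxE mulrCA. Qed.

Lemma dotvZl u c a : dotv (c *: u) a = c * dotv u a.
Proof. by rewrite /dotv mulr_sumr; apply: eq_bigr => k _; rewrite mxE mulrA. Qed.

Lemma dotv0 u : dotv u 0 = 0.
Proof. by rewrite /dotv big1 // => k _; rewrite mxE mulr0. Qed.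

Lemma dotv_sum u n (P : pred 'I_n) (F : 'I_n -> 'rV[R]_d) :
  dotv u (\sum_(j < n | P j) F j) = \sum_(j < n | P j) dotv u (F j).
Proof. exact: (big_morph _ (dotvD u) (dotv0 u)). Qed.

Lemma enorm_ge0 a : 0 <= enorm a.
Proof. exact: sqrtr_ge0. Qed.

Lemma enorm_sq a : enorm a ^+ 2 = \sum_(k < d) a ord0 k ^+ 2.
Proof. by rewrite /enorm sqr_sqrtr // sumr_ge0 // => k _; rewrite sqr_ge0. Qed.

Lemma enormN a : enorm (- a) = enorm a.
Proof. by rewrite /enorm; congr Num.sqrt; apply: eq_bigr => k _; rewrite mxE sqrrN. Qed.

Lemma dotvv a : dotv a a = enorm a ^+ 2.
Proof. by rewrite enorm_sq; apply: eq_bigr => k _; rewrite expr2. Qed.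

Lemma enormZ c a : enorm (c *: a) = `|c| * enorm a.
Proof.
rewrite /enorm -sqrtr_sqr -sqrtrM ?sqr_ge0 //; congr Num.sqrt.
by rewrite mulr_sumr; apply: eq_bigr => k _; rewrite mxE exprMn.
Qed.

Lemma dotv_le u a : enorm u = 1 -> dotv u a <= enorm a.
Proof.
move=> u1.
have [a0|apos] := eqVneq (enorm a) 0.
  have : \sum_(k < d) a ord0 k ^+ 2 = 0 by rewrite -enorm_sq a0 expr0n.
  move/eqP; rewrite psumr_eq0; last by move=> k _; rewrite sqr_ge0.
  move/allP => H; rewrite a0 /dotv big1 // => k _.
  have /implyP := H k (mem_index_enum _); rewrite sqrf_eq0 => /(_ isT) /eqP ->.
  by rewrite mulr0.
set e := enorm a.
have e0 : 0 < e by rewrite lt0r apos enorm_ge0.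
have key k : u ord0 k * a ord0 k <= (u ord0 k ^+ 2 * e + a ord0 k ^+ 2 / e) / 2.
  have : 0 <= (u ord0 k * e - a ord0 k) ^+ 2 / e by rewrite divr_ge0 ?sqr_ge0 ?ltW.
  have -> : (u ord0 k * e - a ord0 k) ^+ 2 / e =
     u ord0 k ^+ 2 * e + a ord0 k ^+ 2 / e - 2 * (u ord0 k * a ord0 k).
    by field; rewrite gt_eqF.
  by rewrite subr_ge0 => H; rewrite ler_pdivlMr // mulrC.
apply: (le_trans (ler_sum _ (fun k _ => key k))).
rewrite -mulr_suml big_split /= -mulr_suml -mulr_suml -!enorm_sq u1 /e.
rewrite expr1n mul1r expr2 mulfK ?gt_eqF //. idtac. by rewrite le_eqVlt; apply/orP; left; apply/eqP; field.
Qed.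

Lemma dotv_abs u a : enorm u = 1 -> `|dotv u a| <= enorm a.
Proof.
move=> u1; rewrite ler_norml dotv_le // andbT lerNl -dotvN.
by rewrite -(enormN a) dotv_le.
Qed.

End Dot.
Arguments dotv {R d}.


Section Ana.
Variable (R : realType).

Lemma dotv_cont d (u : 'rV[R]_d) : continuous (dotv u).
Proof.
have -> : dotv u = \sum_(k < d) (fun w : 'rV[R]_d => u ord0 k * w ord0 k).
  by rewrite fct_sumE; apply/funext => w.
elim/big_ind: _ => [|f g cf cg|k _] x.
- exact: cst_continuous.
- exact: (cvgD (cf x) (cg x)).
- apply: (@continuousZ _ R^o _ (fun=> u ord0 k) (fun w : 'rV[R]_d => w ord0 k : R^o)).
    exact: cst_continuous.
  exact: coord_continuous.
Qed.

Lemma within_comp_cont (T U V : topologicalType) (A : set T) (f : T -> U) (g : U -> V) :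
  {within A, continuous f} -> continuous g -> {within A, continuous (g \o f)}.
Proof.
move=> /subspace_continuousP fc gc; apply/subspace_continuousP => x Ax.
exact: (continuous_cvg _ (gc (f x)) (fc x Ax)).
Qed.

Lemma within_shift_cont (V : topologicalType) (f : R -> V) (A B : set R) c :
  (forall s, A s -> B (s - c)) -> {within B, continuous f} ->
  {within A, continuous (fun s => f (s - c))}.
Proof.
move=> AB /subspace_continuousP fc; apply/subspace_continuousP => x Ax.
have := fc _ (AB _ Ax).
apply: (cvg_comp (fun s => s - c) f).
move=> P /= [e e0 He]; exists e => // y /= xy Ay.
apply: He => /=; last exact: AB.
by have -> : x - c - (y - c) = x - y by ring.
Qed.

Lemma is_derive_shiftarg (V : normedModType R) (f : R -> V) (t c : R) (df : V) :
  is_derive (t - c) 1 f df -> is_derive t 1 (fun s => f (s - c)) df.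
Proof.
case=> dv dval.
have E : (fun h : R => h^-1 *: ((fun s => f (s - c)) (h *: 1 + t) - f (t - c)))
       = (fun h : R => h^-1 *: (f (h *: 1 + (t - c)) - f (t - c))).
  by apply/funext => h /=; rewrite addrA.
have dv' : derivable (fun s => f (s - c)) t 1.
  by rewrite /derivable E.
apply: DeriveDef => //.
by rewrite /derive E.
Qed.

Lemma is_derive_dotv d (u : 'rV[R]_d) (f : R -> 'rV[R]_d) (t : R) df :
  is_derive t 1 f df -> is_derive t 1 (fun s => dotv u (f s)) (dotv u df).
Proof.
move=> fd.
have dv : derivable f t 1 by case: fd.
have Dv := derive_mx dv.
have ck k : is_derive t 1 (fun s => f s ord0 k) (df ord0 k).
  have dk := (derivable_mxP f t 1).1 dv ord0 k.
  apply: DeriveDef => //.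
  by move: Dv; rewrite derive_val => ->; rewrite mxE.
have -> : (fun s => dotv u (f s)) =
   \sum_(k < d) (u ord0 k \*: (fun s => f s ord0 k)).
  by rewrite fct_sumE; apply/funext => s.
rewrite /dotv.
apply: is_derive_sum => k.
Qed.

End Ana.


Section C.
Variable (R : realType).

Lemma mvt_le (f df : R -> R) (a b M : R) : a <= b ->
  (forall t, a < t -> t < b -> is_derive t 1 f (df t)) ->
  (forall t, a < t -> t < b -> df t <= M) ->
  {within `[a, b], continuous f} -> f b - f a <= M * (b - a).
Proof.
move=> ab fd dM fc.
have [eab|nab] := eqVneq a b.
  by rewrite eab !subrr mulr0.
have altb : a < b by rewrite lt_neqAle nab ab.
have [c cab ->] : exists2 c, c \in `]a, b[ & f b - f a = df c * (b - a).
  apply: MVT altb _ fc => x; rewrite in_itv /= => /andP[].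
  exact: fd.
move: cab; rewrite in_itv /= => /andP[c1 c2].
by rewrite ler_wpM2r ?subr_ge0 // dM.
Qed.

Lemma mvt_abs (f df : R -> R) (a b M : R) : a <= b ->
  (forall t, a < t -> t < b -> is_derive t 1 f (df t)) ->
  (forall t, a < t -> t < b -> `|df t| <= M) ->
  {within `[a, b], continuous f} -> `|f b - f a| <= M * (b - a).
Proof.
move=> ab fd dM fc; rewrite ler_norml; apply/andP; split.
  rewrite lerNl opprB.
  have := @mvt_le (fun t => - f t) (fun t => - df t) a b M ab.
  rewrite opprK addrC; apply.
  - by move=> t ta tb; apply: is_deriveN; apply: fd.
  - by move=> t ta tb; rewrite (le_trans _ (dM t ta tb)) // -normrN ler_norm.
  - by apply: (@within_comp_cont _ _ _ _ f (-%R : R -> R) fc); apply: opp_continuous.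
apply: (@mvt_le f df a b M ab fd) => // t ta tb.
exact: le_trans (ler_norm _) (dM t ta tb).
Qed.

End C.


Section D.
Variable (R : realType).

Lemma coord_le_norm d (w : 'rV[R]_d) k : `|w ord0 k| <= `|w|.
Proof.
rewrite [leRHS]/Num.Def.normr/= mx_normrE.
apply: le_trans; last exact: (le_bigmax _ _ (ord0, k)).
by [].
Qed.

Lemma enorm_le_coord d (w : 'rV[R]_d) C : (forall k, `|w ord0 k| <= C) ->
  enorm w <= Num.sqrt (d%:R * C ^+ 2).
Proof.
move=> H; rewrite /enorm ler_sqrt; last first.
  by rewrite mulr_ge0 ?sqr_ge0.
have -> : d%:R * C ^+ 2 = \sum_(k < d) C ^+ 2 by rewrite sumr_const card_ord mulr_natl.
apply: ler_sum => k _.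
have := H k; rewrite ler_norml => /andP[h1 h2]; nra.
Qed.

Lemma Delta0_ub N d (tau : R) (y : 'I_N -> R -> 'rV[R]_d) :
  (forall i, {within `[- tau, +oo[, continuous (y i)}) ->
  forall i j s t, s \in `[- tau, 0] -> t \in `[- tau, 0] ->
  enorm (y i s - y j t) <= Delta0 tau y.
Proof.
move=> yc i j s t hs ht.
apply: ub_le_sup; last by exists i, j, s, t.
have bnd i' : exists M : R, forall s', s' \in `[- tau, 0] -> `|y i' s'| <= M.
  have cpt : compact (y i' @` `[- tau, 0]).
    apply: continuous_compact; last exact: segment_compact.
    apply: continuous_subspaceW (yc i') => r /=; rewrite !in_itv /= => /andP[-> _] //.
  have [M0 [_ HM]] := compact_bounded cpt.
  exists (M0 + 1) => s' hs'.
  by apply: (HM (M0 + 1)); [rewrite ltrDl | exists s'].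
have [Mf HMf] := fin_all_exists bnd.
pose M := \sum_(i0 < N) `|Mf i0|.
have HM i' s' : s' \in `[- tau, 0] -> `|y i' s'| <= M.
  move=> hs'; apply: (le_trans (HMf i' s' hs')).
  apply: (le_trans (ler_norm _)).
  by rewrite /M (bigD1 i') //= lerDl sumr_ge0.
exists (Num.sqrt (d%:R * (M + M) ^+ 2)) => r [i1 [j1 [s1 [t1 [h1 [h2 ->]]]]]].
apply: enorm_le_coord => k.
have e1 := @coord_le_norm d (y i1 s1 - y j1 t1) k.
have e2 := ler_normB (y i1 s1) (y j1 t1).
have e3 := HM i1 s1 h1; have e4 := HM j1 t1 h2.
apply: (le_trans e1); apply: (le_trans e2); exact: lerD.
Qed.

End D.


Section E.
Variable (R : realType).

Definition geo (q : R) n := \sum_(m < n) q ^+ m.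

Lemma geoS q n : geo q n.+1 = 1 + q * geo q n.
Proof.
rewrite /geo big_ord_recl expr0 mulr_sumr; congr (_ + _).
by apply: eq_bigr => i _; rewrite /= exprS.
Qed.

Lemma geoSr q n : geo q n.+1 = geo q n + q ^+ n.
Proof. by rewrite /geo big_ord_recr. Qed.

Lemma min_cases (x y : R) :
  [/\ Order.min x y <= x, Order.min x y <= y & (Order.min x y = x \/ Order.min x y = y)].
Proof.
case: (leP x y) => h; split => //; try by [left | right].
exact: ltW.
Qed.

Lemma geo_ge0 q n : 0 <= q -> 0 <= geo q n.
Proof. by move=> q0; rewrite /geo sumr_ge0 // => i _; rewrite exprn_ge0. Qed.

Lemma Z_props (s : R) n : 0 <= s ->
  [/\ 1 <= (Z_pair s n).1, (Z_pair s n).1 <= (Z_pair s n).2 &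
      geo (1 + 2 * s) n.+1 <= (Z_pair s n).1].
Proof.
move=> s0; elim: n => [|n [h1 h2 h3]].
  by rewrite /= geoS /geo big_ord0 mulr0 addr0 lexx.
rewrite /= geoS.
set z := (Z_pair s n).1; set S := (Z_pair s n).2.
move: h1 h2 h3; rewrite -/z -/S => h1 h2 h3.
have g0 : 0 <= geo (1 + 2 * s) n.+1 by apply: geo_ge0; lra.
split.
- nra.
- nra.
- have : (1 + 2 * s) * geo (1 + 2 * s) n.+1 <= (1 + 2 * s) * z.
    by rewrite ler_wpM2l // addr_ge0 // mulr_ge0.
  nra.
Qed.

Lemma Ws_ge (s : R) K : 0 <= s -> (2 <= K)%N -> s * geo (1 + 2 * s) K <= Ws s K.
Proof.
move=> s0; case: K => [|[|k]] // _.
rewrite /Ws /Zs /=.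
have [h1 h2 h3] := @Z_props s k s0.
have [g1 g2 g3] := @Z_props s k.+1 s0.
move: g1 g2 g3; rewrite /=.
set z := (Z_pair s k).1; set S := (Z_pair s k).2.
move=> g1 g2 g3.
have : s * geo (1 + 2 * s) k.+2 <= s * (1 + (1 + s) * z + s * S).
  by rewrite ler_wpM2l.
nra.
Qed.

End E.

End Helpers.
Import Helpers.

Theorem lemma4p5 (R : realType) (N d : nat) (hN : (2 <= N)%N) (hd : (1 <= d)%N)
  (sigma tau : R) (hsig : 0 < sigma) (hst : sigma <= tau)
  (psi : R -> R)
  (psi_cont : {within `[0, +oo[, continuous psi})
  (psi_noninc : forall a b : R, 0 <= a -> a <= b -> psi b <= psi a)
  (psi_pos : forall r : R, 0 <= r -> 0 < psi r)
  (psi_le1 : forall r : R, 0 <= r -> psi r <= 1)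
  (x v : 'I_N -> R -> 'rV[R]_d)
  (x_cont : forall i, {within `[- tau, +oo[, continuous (x i)})
  (v_cont : forall i, {within `[- tau, +oo[, continuous (v i)})
  (x_deriv : forall i (t : R), - tau < t -> is_derive t 1 (x i) (v i t))
  (v_ode : forall i (t : R), 0 < t ->
     is_derive t 1 (v i)
       (\sum_(j < N | j != i)
          cs_weight psi sigma tau x i j t *: (v j (t - tau) - v i (t - sigma))))
  (K : nat) (hK : 2%:R * tau <= K%:R * sigma)
  (hKmin : forall k : nat, (k < K)%N -> k%:R * sigma < 2%:R * tau) :
  forall i j : 'I_N,
    enorm (x j tau - x i (2%:R * tau - sigma))
      <= Delta0 tau x + Ws sigma K * Delta0 tau v.
Proof.
move=> i j.
have tau0 : 0 < tau by apply: lt_le_trans hst.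
have in0 : (0 : R) \in `[- tau, 0] by rewrite in_itv /= lexx andbT lerNl oppr0 ltW.
have Dx0 : 0 <= Delta0 tau x.
  exact: le_trans (enorm_ge0 _) (Delta0_ub x_cont i i in0 in0).
have Dv0 : 0 <= Delta0 tau v.
  exact: le_trans (enorm_ge0 _) (Delta0_ub v_cont i i in0 in0).
have K2 : (2 <= K)%N.
  clear hKmin; move: hK; case: K => [|[|k]] //; rewrite ?mul0r ?mul1r => hK; lra.
have Wg := Ws_ge (ltW hsig) K2.
set Dx := Delta0 tau x; set Dv := Delta0 tau v.
set q := 1 + 2 * sigma.
have q0 : 0 <= q by rewrite /q; lra.
suff main : enorm (x j tau - x i (2%:R * tau - sigma)) <= Dx + sigma * geo q K * Dv.
  apply: (le_trans main); rewrite lerD2l; exact: ler_wpM2r.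
set w := x j tau - x i (2%:R * tau - sigma).
have [w0|wn0] := eqVneq (enorm w) 0.
  rewrite w0 addr_ge0 // mulr_ge0 // mulr_ge0 //; [exact: ltW | exact: geo_ge0].
set e := enorm w.
have e0 : 0 < e by rewrite lt0r wn0 enorm_ge0.
set u := e^-1 *: w.
have u1 : enorm u = 1.
  by rewrite /u enormZ ger0_norm ?invr_ge0 ?ltW // mulVf.
have uw : dotv u w = e.
  by rewrite /u dotvZl dotvv -/e expr2 mulKf // gt_eqF.
have P : forall m a b s s', -tau <= s -> s <= m%:R * sigma ->
    -tau <= s' -> s' <= m%:R * sigma ->
    `|dotv u (v a s - v b s')| <= q ^+ m * Dv.
  elim=> [|m IH] a b s s' h1 h2 h3 h4.
    rewrite expr0 mul1r; apply: le_trans (dotv_abs _ u1) _.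
    apply: Delta0_ub => //; rewrite in_itv /= ?h1 ?h3 /=.
      by move: h2; rewrite mul0r.
    by move: h4; rewrite mul0r.
  have mpos : 0 <= m%:R * sigma by rewrite mulr_ge0 ?ler0n ?ltW.
  have mS : m.+1%:R * sigma = m%:R * sigma + sigma by rewrite -natr1 mulrDl mul1r.
  set B := q ^+ m * Dv.
  have B0 : 0 <= B by rewrite /B mulr_ge0 // exprn_ge0.
  have drift a' s1 : m%:R * sigma <= s1 -> s1 <= m.+1%:R * sigma ->
      `|dotv u (v a' s1) - dotv u (v a' (m%:R * sigma))| <= B * sigma.
    move=> l1 l2.
    apply: (le_trans (@mvt_abs _ (fun t => dotv u (v a' t))
      (fun t => dotv u (\sum_(b < N | b != a')
          cs_weight psi sigma tau x a' b t *: (v b (t - tau) - v a' (t - sigma))))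
      _ _ B l1 _ _ _)).
    - move=> t t1 t2; apply: is_derive_dotv; apply: v_ode.
      exact: le_lt_trans mpos t1.
    - move=> t t1 t2; rewrite dotv_sum.
      apply: le_trans (ler_norm_sum _ _ _) _.
      apply: (@le_trans _ _ (\sum_(b < N | b != a') ((N.-1)%:R^-1 * B))).
        apply: ler_sum => b0 hb; rewrite dotvZ normrM.
        apply: ler_pM => //.
          rewrite /cs_weight ger0_norm; last first.
            by rewrite mulr_ge0 ?invr_ge0 // ltW // psi_pos // enorm_ge0.
          by rewrite -[X in _ <= X]mulr1 ler_wpM2l ?invr_ge0 // psi_le1 // enorm_ge0.
        apply: IH; lra.
      rewrite sumr_const cardC1 card_ord.
      have -> : forall c : R, c *+ N.-1 = (N.-1)%:R * c by move=> c; rewrite mulr_natl.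
      rewrite mulrA mulfV ?mul1r //.
      by rewrite pnatr_eq0 -lt0n; move: hN; case: (N) => [|[|n]].
    - apply: (within_comp_cont _ (@dotv_cont _ _ u)).
      apply: continuous_subspaceW (v_cont a') => r /=; rewrite !in_itv /= => /andP[r1 _].
      rewrite andbT; lra.
    - by rewrite ler_wpM2l // lerBlDl -mS.
  have split a' s1 : -tau <= s1 -> s1 <= m.+1%:R * sigma ->
      exists s0, [/\ -tau <= s0, s0 <= m%:R * sigma &
        `|dotv u (v a' s1) - dotv u (v a' s0)| <= B * sigma].
    move=> l1 l2; case: (leP s1 (m%:R * sigma)) => hs.
      by exists s1; split => //; rewrite subrr normr0 mulr_ge0 // ltW.
    exists (m%:R * sigma); split => //; first lra.
    exact: drift (ltW hs) l2.
  have [s0 [s01 s02 s03]] := split a s h1 h2.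
  have [s0' [s01' s02' s03']] := split b s' h3 h4.
  have I := IH a b s0 s0' s01 s02 s01' s02'.
  have E : dotv u (v a s - v b s') = (dotv u (v a s) - dotv u (v a s0))
      + dotv u (v a s0 - v b s0') - (dotv u (v b s') - dotv u (v b s0')).
    by rewrite !dotvB; ring.
  rewrite E exprS -mulrA -/B.
  apply: le_trans (ler_normB _ _) _.
  apply: le_trans (lerD (ler_normD _ _) (lexx _)) _.
  move: I; rewrite -/B => I.
  have -> : q * B = B * sigma + B + B * sigma by rewrite /q; ring.
  by apply: lerD; [apply: lerD|].
pose phi t := dotv u (x j (t - tau)) - dotv u (x i (t - sigma)).
have tau2 : 0 <= 2%:R * tau by rewrite mulr_ge0 ?ler0n ?ltW.
have chain : forall n, phi (Order.min (n%:R * sigma) (2%:R * tau)) - phi 0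
    <= sigma * geo q n * Dv.
  elim=> [|n IHn].
    by rewrite mul0r min_l // subrr /geo big_ord0 mulr0 mul0r.
  have [a1 a2 a3] := min_cases (n%:R * sigma) (2%:R * tau).
  have [b1 b2 b3] := min_cases (n.+1%:R * sigma) (2%:R * tau).
  set a0 := Order.min (n%:R * sigma) (2%:R * tau) in IHn a1 a2 a3 *.
  set b0 := Order.min (n.+1%:R * sigma) (2%:R * tau) in b1 b2 b3 *.
  have npos : 0 <= n%:R * sigma by rewrite mulr_ge0 ?ler0n ?ltW.
  have nS : n.+1%:R * sigma = n%:R * sigma + sigma by rewrite -natr1 mulrDl mul1r.
  have a0pos : 0 <= a0 by case: a3 => ->.
  have ab : a0 <= b0 by case: a3 => ha; case: b3 => hb; lra.
  have ba : b0 - a0 <= sigma by case: a3 => ha; case: b3 => hb; lra.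
  have Bn0 : 0 <= q ^+ n * Dv by rewrite mulr_ge0 // exprn_ge0.
  have M := @mvt_le _ phi
    (fun t => dotv u (v j (t - tau)) - dotv u (v i (t - sigma))) a0 b0 (q ^+ n * Dv) ab.
  have step : phi b0 - phi a0 <= q ^+ n * Dv * (b0 - a0).
    apply: M.
    - move=> t t1 t2.
      have H1 := is_derive_shiftarg (is_derive_dotv u (x_deriv j (t - tau) ltac:(lra))).
      have H2 := is_derive_shiftarg (is_derive_dotv u (x_deriv i (t - sigma) ltac:(lra))).
      exact: (is_deriveB H1 H2).
    - move=> t t1 t2; rewrite -dotvB.
      apply: le_trans (ler_norm _) _.
      apply: P; lra.
    - have c1 : {within `[a0, b0], continuous (fun s => dotv u (x j (s - tau)))}.
        apply: (@within_shift_cont _ _ (fun s => dotv u (x j s)) _ `[- tau, +oo[ tau).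
          by move=> r; rewrite /= !in_itv /= => /andP[r1 _]; rewrite andbT; lra.
        exact: (within_comp_cont (x_cont j) (@dotv_cont _ _ u)).
      have c2 : {within `[a0, b0], continuous (fun s => dotv u (x i (s - sigma)))}.
        apply: (@within_shift_cont _ _ (fun s => dotv u (x i s)) _ `[- tau, +oo[ sigma).
          by move=> r; rewrite /= !in_itv /= => /andP[r1 _]; rewrite andbT; lra.
        exact: (within_comp_cont (x_cont i) (@dotv_cont _ _ u)).
      move=> t; exact: (@continuousB R R^o _ _ _ t (c1 t) (c2 t)).
  have step2 : q ^+ n * Dv * (b0 - a0) <= q ^+ n * Dv * sigma by rewrite ler_wpM2l.
  rewrite geoSr.
  have -> : phi b0 - phi 0 = (phi b0 - phi a0) + (phi a0 - phi 0) by ring.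
  have -> : sigma * (geo q n + q ^+ n) * Dv = q ^+ n * Dv * sigma + sigma * geo q n * Dv by ring.
  apply: lerD => //; exact: le_trans step step2.
have := chain K.
rewrite min_r // /phi.
have -> : 2%:R * tau - tau = tau by ring.
rewrite -dotvB -/w uw => h.
have h0 : dotv u (x j (0 - tau)) - dotv u (x i (0 - sigma)) <= Dx.
  rewrite -dotvB; apply: le_trans (ler_norm _) _.
  apply: le_trans (dotv_abs _ u1) _.
  apply: Delta0_ub => //; rewrite in_itv /=; apply/andP; split; lra.
lra.
Qed.
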